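(* For $c>0$ define $$p_1(c)=1-2\Phi(c^{-1})-\sqrt{\tfrac{2}{\pi}}\,c\left(1-\exp\{-\tfrac{c^{-2}}{2}\}\right),$$ where $\Phi(s)=\Pr[X\ge s]$ for $X\sim N(0,1)$. Then for all $c>0$, $$p_1(c)=\sqrt{\tfrac{2}{\pi}}\sum_{k=0}^\infty\frac{(-1)^k}{2^kk!(2k+2)(2k+1)}\frac{1}{c^{2k+1}},$$ and for every $\delta\le\frac12$ and every $c\le\min\left\{\delta,\frac{1}{\sqrt{2\ln(1/\delta)}}\right\}$, $$e^{-\sqrt{\frac{2}{\pi}}(1+\delta)c}\le p_1(c)\le e^{-\sqrt{\frac2\pi}(1-\delta^3)c}.$$
   Context: $p_1(c)$ is the probability that two points at distance $cw$ collide under the Euclidean LSH $h(x)=\lceil (g^\top x+b)/w\rceil$ with $g\sim N(0,I_d)$, $b\sim U[0,w]$; the claim concerns only the explicit formula. *)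

(* Defs.v *)
From Stdlib Require Import Reals.
From Coquelicot Require Import Coquelicot.
Open Scope R_scope.

Definition std_normal_pdf (t : R) : R := exp (- t ^ 2 / 2) / sqrt (2 * PI).

Definition Phi (s : R) : R :=
  RInt_gen std_normal_pdf (at_point s) (Rbar_locally p_infty).

Definition p1 (c : R) : R :=
  1 - 2 * Phi (/ c) - sqrt (2 / PI) * c * (1 - exp (- (/ c ^ 2) / 2)).

Definition p1_term (c : R) (k : nat) : R :=
  sqrt (2 / PI) * ((-1) ^ k /
    (2 ^ k * INR (Stdlib.Arith.Factorial.fact k) * (2 * INR k + 2) * (2 * INR k + 1)))
  * / c ^ (2 * k + 1).

(* Main.v *)
Require Import Defs.
From Stdlib Require Import Reals Lra Psatz Factorial.
From Coquelicot Require Import Coquelicot.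
Open Scope R_scope.

Definition gg (t : R) : R := exp (- (t * t)).
Definition GG (x : R) : R := RInt gg 0 x.
Definition uu (x t : R) : R := exp (- (x * x) * (1 + t * t)) / (1 + t * t).

Ltac req := match goal with |- ?a = ?b => change (@eq R a b) end.

Lemma pos1 t : 0 < 1 + t * t.
Proof. nra. Qed.

Lemma cont_ex (f : R -> R) x : ex_derive f x -> continuous f x.
Proof. intros H; apply (@ex_derive_continuous R_AbsRing R_NormedModule f x H). Qed.

Lemma ex_RInt_cont (f : R -> R) a b :
  (forall z, Rmin a b <= z <= Rmax a b -> continuous f z) -> ex_RInt f a b.
Proof. apply (@ex_RInt_continuous R_CompleteNormedModule). Qed.

Lemma RInt_correct_R (f : R -> R) a b : ex_RInt f a b -> is_RInt f a b (RInt f a b).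
Proof. apply (@RInt_correct R_CompleteNormedModule). Qed.

Lemma RInt_scal_R (f : R -> R) a b k : ex_RInt f a b ->
  RInt (fun t => k * f t) a b = k * RInt f a b.
Proof. apply (@RInt_scal R_CompleteNormedModule). Qed.

Lemma gg_cont t : continuous gg t.
Proof. apply cont_ex; unfold gg; auto_derive; auto. Qed.

Lemma GG_ex a b : ex_RInt gg a b.
Proof. apply ex_RInt_cont; intros; apply gg_cont. Qed.

Lemma GG_deriv (x : R) : is_derive GG x (gg x).
Proof.
  apply (is_derive_RInt gg GG 0 x).
  - apply filter_forall; intros b; apply RInt_correct_R, GG_ex.
  - apply gg_cont.
Qed.

Lemma uu_cont x t : continuous (uu x) t.
Proof.
  apply cont_ex; unfold uu; auto_derive.
  generalize (pos1 t); lra.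
Qed.

Lemma uu_dx x t : is_derive (fun z => uu z t) x (-2 * x * exp (- (x * x) * (1 + t * t))).
Proof.
  unfold uu; auto_derive.
  - generalize (pos1 t); lra.
  - field. generalize (pos1 t); lra.
Qed.

Lemma Derive_uu x t : Derive (fun z => uu z t) x = -2 * x * exp (- (x * x) * (1 + t * t)).
Proof. apply is_derive_unique, uu_dx. Qed.

Lemma comp_lin_gg x : x * RInt (fun t => gg (x * t)) 0 1 = GG x.
Proof.
  unfold GG.
  transitivity (scal x (RInt (fun t => gg (x*t)) 0 1)); [reflexivity|].
  rewrite <- (RInt_scal (fun t => gg (x * t)) 0 1 x).
  2:{ apply ex_RInt_cont; intros.
      apply cont_ex; unfold gg; auto_derive; auto. }
  rewrite (RInt_ext _ (fun y => scal x (gg (x*y+0)))) by (intros; rewrite Rplus_0_r; reflexivity).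
  etransitivity; [apply (@RInt_comp_lin R_CompleteNormedModule gg x 0 0 1); apply GG_ex|]. f_equal; ring.
Qed.

Lemma U_deriv (x : R) : is_derive (fun x => RInt (uu x) 0 1) x (-2 * gg x * GG x).
Proof.
  assert (H := is_derive_RInt_param uu 0 1 x).
  replace (-2 * gg x * GG x) with (RInt (fun t => Derive (fun u => uu u t) x) 0 1).
  apply H.
  - apply filter_forall; intros y t _. eexists; apply uu_dx.
  - intros t _.
    apply continuity_2d_pt_ext with (fun u v => -2 * u * exp (- (u * u) * (1 + v * v))).
    { intros; rewrite Derive_uu; reflexivity. }
    apply continuity_2d_pt_mult.
    + apply continuity_2d_pt_mult. apply continuity_2d_pt_const. apply continuity_2d_pt_id1.
    + apply (continuity_1d_2d_pt_comp exp (fun u v => - (u * u) * (1 + v * v))).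
      * apply derivable_continuous_pt, derivable_pt_exp.
      * apply continuity_2d_pt_mult.
        apply continuity_2d_pt_opp, continuity_2d_pt_mult; apply continuity_2d_pt_id1.
        apply continuity_2d_pt_plus. apply continuity_2d_pt_const.
        apply continuity_2d_pt_mult; apply continuity_2d_pt_id2.
  - apply filter_forall; intros y. apply ex_RInt_cont; intros; apply uu_cont.
  - rewrite <- comp_lin_gg.
    transitivity (RInt (fun t => (-2 * x * gg x) * (gg (x * t))) 0 1).
    + apply RInt_ext; intros t _. rewrite Derive_uu. unfold gg.
      rewrite (Rmult_assoc (-2 * x) (exp _)), <- exp_plus. f_equal. f_equal. ring.
    + rewrite (RInt_scal_R (fun t => gg (x*t))). req; ring.
      apply ex_RInt_cont; intros.
      apply cont_ex; unfold gg; auto_derive; auto.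
Qed.

Definition HH x := RInt (uu x) 0 1 + GG x * GG x.

Lemma HH_deriv (x : R) : is_derive HH x 0.
Proof.
  unfold HH.
  assert (H2 : is_derive (fun x => GG x * GG x) x (gg x * GG x + GG x * gg x)).
  { apply (is_derive_mult GG GG); try apply GG_deriv.
    intros; simpl; unfold mult; simpl; ring. }
  assert (H := is_derive_plus _ _ x _ _ (U_deriv x) H2).
  replace 0 with (plus (-2 * gg x * GG x) (gg x * GG x + GG x * gg x)) at 1.
  exact H.
  unfold plus; simpl. ring.
Qed.

Lemma HH0 : HH 0 = PI / 4.
Proof.
  unfold HH, GG. rewrite RInt_point. unfold zero; simpl.
  rewrite <- atan_1.
  replace (atan 1) with (atan 1 - atan 0) by (rewrite atan_0; ring).
  rewrite Rmult_0_l, Rplus_0_r.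
  apply is_RInt_unique.
  apply (is_RInt_derive atan (uu 0)).
  - intros t _. replace (uu 0 t) with (/ (1 + t²)). apply is_derive_atan.
    unfold uu, Rsqr. rewrite Rmult_0_l, Ropp_0, Rmult_0_l, exp_0. field.
    generalize (pos1 t); lra.
  - intros; apply uu_cont.
Qed.

Lemma HH_const x : HH x = PI / 4.
Proof.
  rewrite <- HH0.
  destruct (Rtotal_order 0 x) as [H|[H|H]].
  - symmetry; apply eq_is_derive; auto. intros; apply HH_deriv.
  - subst; auto.
  - apply eq_is_derive; auto. intros; apply HH_deriv.
Qed.

Lemma exp_mono_le x y : x <= y -> exp x <= exp y.
Proof.
  intros H; destruct (Req_dec x y) as [->|Hn]; [lra|].
  left; apply exp_increasing; lra.
Qed.

Lemma RInt_uu_bounds x : 0 <= RInt (uu x) 0 1 <= exp (- (x * x)).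
Proof.
  assert (Hex : ex_RInt (uu x) 0 1) by (apply ex_RInt_cont; intros; apply uu_cont).
  assert (Hu : forall t, 0 <= uu x t <= exp (- (x * x))).
  { intros t. unfold uu. generalize (pos1 t); intros Ht.
    assert (E1 := exp_pos (- (x * x) * (1 + t * t))).
    assert (E2 : exp (- (x * x) * (1 + t * t)) <= exp (- (x * x))) by (apply exp_mono_le; nra).
    assert (I1 : 0 < / (1 + t * t)) by (apply Rinv_0_lt_compat; lra).
    assert (I2 : / (1 + t * t) <= 1).
    { apply Rle_trans with (/ 1); [apply Rinv_le_contravar; nra | rewrite Rinv_1; lra]. }
    unfold Rdiv; split; nra. }
  split.
  - apply RInt_ge_0; auto; try lra. intros; apply Hu.
  - replace (exp (- (x * x))) with (RInt (fun _ => exp (- (x * x))) 0 1).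
    + apply RInt_le; auto; try lra. apply ex_RInt_const. intros; apply Hu.
    + rewrite RInt_const. unfold scal; simpl; unfold mult; simpl. ring.
Qed.

Lemma lim_expm : is_lim (fun x => exp (- (x * x))) p_infty 0.
Proof.
  apply (is_lim_comp (fun y => exp y) (fun x => - (x * x)) p_infty 0 m_infty).
  - apply is_lim_exp_m.
  - change m_infty with (Rbar_opp p_infty). apply is_lim_opp.
    change p_infty with (Rbar_mult p_infty p_infty) at 2.
    apply is_lim_mult; try apply is_lim_id. simpl; auto.
  - exists 0; intros; discriminate.
Qed.

Lemma lim_RInt_uu : is_lim (fun x => RInt (uu x) 0 1) p_infty 0.
Proof.
  apply (is_lim_le_le_loc (fun _ => 0) (fun x => exp (- (x * x)))).
  - exists 0; intros; apply RInt_uu_bounds.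
  - apply is_lim_const.
  - apply lim_expm.
Qed.

Lemma GG2_lim : is_lim (fun x => GG x * GG x) p_infty (PI / 4).
Proof.
  apply (is_lim_ext (fun x => PI / 4 - RInt (uu x) 0 1)).
  - intros x. generalize (HH_const x); unfold HH; intros; lra.
  - eapply is_lim_minus. apply is_lim_const. apply lim_RInt_uu.
    simpl. unfold is_Rbar_minus, is_Rbar_plus; simpl. f_equal; f_equal; ring.
Qed.

Lemma gg_pos t : 0 < gg t.
Proof. apply exp_pos. Qed.

Lemma GG_nonneg x : 0 <= x -> 0 <= GG x.
Proof.
  intros; apply RInt_ge_0; auto. apply GG_ex. intros; left; apply gg_pos.
Qed.

Lemma GG_lim : is_lim GG p_infty (sqrt PI / 2).
Proof.
  apply (is_lim_ext_loc (fun x => sqrt (GG x * GG x))).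
  - exists 0; intros x Hx. apply sqrt_square, GG_nonneg; lra.
  - replace (sqrt PI / 2) with (sqrt (PI / 4)).
    + apply (is_lim_comp_continuous (fun x => GG x * GG x) sqrt p_infty (PI/4)).
      apply GG2_lim. apply continuous_sqrt.
    + replace (PI / 4) with ((sqrt PI / 2) * (sqrt PI / 2)).
      * apply sqrt_square. assert (0 <= sqrt PI) by apply sqrt_pos. lra.
      * assert (H := sqrt_sqrt PI (Rlt_le _ _ PI_RGT_0)). nra.
Qed.

Definition FF (x : R) : R := GG (x / sqrt 2) / sqrt PI.

Lemma sqrt2_pos : 0 < sqrt 2.
Proof. apply sqrt_lt_R0; lra. Qed.
Lemma sqrtPI_pos : 0 < sqrt PI.
Proof. apply sqrt_lt_R0, PI_RGT_0. Qed.

Lemma FF_lim : is_lim FF p_infty (1 / 2).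
Proof.
  assert (H2 := sqrt2_pos). assert (HP := sqrtPI_pos).
  apply (is_lim_ext (fun y => GG (/ sqrt 2 * y + 0) * / sqrt PI)).
  { intros y; unfold FF, Rdiv. rewrite Rplus_0_r, (Rmult_comm (/ sqrt 2) y). reflexivity. }
  replace (Finite (1 / 2)) with (Rbar_mult (sqrt PI / 2) (/ sqrt PI)).
  2:{ simpl. f_equal. field. lra. }
  apply is_lim_scal_r.
  apply (is_lim_comp_lin GG (/ sqrt 2) 0 p_infty).
  - replace (Rbar_plus (Rbar_mult (/ sqrt 2) p_infty) 0) with p_infty.
    apply GG_lim.
    rewrite (is_Rbar_mult_unique _ _ p_infty). reflexivity.
    apply is_Rbar_mult_sym, is_Rbar_mult_p_infty_pos. simpl.
    apply Rinv_0_lt_compat; lra.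
  - apply Rgt_not_eq, Rlt_gt, Rinv_0_lt_compat; lra.
Qed.

Lemma FF_deriv (x : R) : is_derive FF x (std_normal_pdf x).
Proof.
  assert (H2 := sqrt2_pos). assert (HP := sqrtPI_pos).
  unfold FF.
  assert (Hc : is_derive (fun x => GG (x / sqrt 2)) x (scal (/ sqrt 2) (gg (x / sqrt 2)))).
  { apply (is_derive_comp GG (fun x => x / sqrt 2)). apply GG_deriv.
    replace (/ sqrt 2) with (1 / sqrt 2) by (field; lra).
    auto_derive; auto; field; lra. }
  assert (Hd := is_derive_scal_l _ x _ (/ sqrt PI) Hc).
  apply (is_derive_ext (fun y => scal (GG (y / sqrt 2)) (/ sqrt PI))).
  { intros; unfold scal; simpl; unfold mult; simpl; unfold Rdiv; req; ring. }
  replace (std_normal_pdf x) with (scal (scal (/ sqrt 2) (gg (x / sqrt 2))) (/ sqrt PI)).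
  exact Hd.
  unfold std_normal_pdf, gg, scal; simpl; unfold mult; simpl.
  assert (S2 : sqrt 2 * sqrt 2 = 2) by (apply sqrt_sqrt; lra).
  rewrite sqrt_mult by (try lra; left; apply PI_RGT_0).
  replace (x / sqrt 2 * (x / sqrt 2)) with (x * x / (sqrt 2 * sqrt 2)) by (field; lra).
  rewrite S2. simpl. req. replace (- (x * (x * 1)) / 2) with (- (x * x / 2)) by field. field. lra.
Qed.

Lemma pdf_cont x : continuous std_normal_pdf x.
Proof. apply cont_ex. unfold std_normal_pdf; auto_derive; auto. Qed.

Lemma Derive_FF x : Derive FF x = std_normal_pdf x.
Proof. apply is_derive_unique, FF_deriv. Qed.

Lemma Phi_eq s : Phi s = 1 / 2 - FF s.
Proof.
  unfold Phi.
  apply is_RInt_gen_unique.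
  apply (is_RInt_gen_ext (Derive FF)).
  { apply filter_forall; intros; apply Derive_FF. }
  apply is_RInt_gen_Derive.
  - apply filter_forall; intros. eexists; apply FF_deriv.
  - apply filter_forall; intros. apply (continuous_ext std_normal_pdf).
    intros; symmetry; apply Derive_FF. apply pdf_cont.
  - intros P HP. unfold filtermap, at_point. apply (locally_singleton _ _ HP).
  - apply FF_lim.
Qed.
Definition bc (k : nat) : R := (-1) ^ k / (2 ^ k * INR (fact k) * (2 * INR k + 1)).
Definition ec (k : nat) : R := (-1) ^ k / (2 ^ k * INR (fact k)).

Lemma is_series_plus_R (a b : nat -> R) la lb :
  is_series a la -> is_series b lb -> is_series (fun n => a n + b n) (la + lb).
Proof. intros Ha Hb. exact (is_series_plus a b la lb Ha Hb). Qed.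

Lemma is_series_scal_R (a : nat -> R) k l :
  is_series a l -> is_series (fun n => k * a n) (k * l).
Proof. intros Ha. exact (is_series_scal k a l Ha). Qed.

Lemma is_pseries_R (a : nat -> R) x l :
  is_pseries a x l <-> is_series (fun n => x ^ n * a n) l.
Proof.
  assert (E : forall n, scal (pow_n x n) (a n) = x ^ n * a n).
  { intros n. rewrite <- pow_n_pow. reflexivity. }
  unfold is_pseries. split; intros H; (eapply is_series_ext; [|exact H]); intros n; first [exact (E n) | exact (eq_sym (E n))].
Qed.

Lemma fact_pos k : 0 < INR (fact k).
Proof. apply lt_0_INR, lt_O_fact. Qed.

Lemma pow2_pos k : 0 < 2 ^ k.
Proof. apply pow_lt; lra. Qed.

Lemma exp_series y : is_series (fun n => y ^ n * ec n) (exp (- y / 2)).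
Proof.
  assert (H := is_exp_Reals (- y / 2)). apply (proj1 (is_pseries_R _ _ _)) in H.
  revert H; apply is_series_ext; intros n.
  unfold ec. req. replace (- y / 2) with ((-1) * y * / 2) by field.
  rewrite !Rpow_mult_distr, pow_inv.
  assert (H1 := fact_pos n). assert (H2 := pow2_pos n).
  field. lra.
Qed.

Lemma CV_radius_inf (a : nat -> R) : (forall x, CV_disk a x) -> CV_radius a = p_infty.
Proof.
  intros H. unfold CV_radius.
  destruct (Lub_Rbar_correct (CV_disk a)) as [Hub _].
  destruct (Lub_Rbar (CV_disk a)) as [r| |] eqn:E; auto.
  - exfalso. assert (K := Hub (r + 1) (H _)). simpl in K. lra.
  - exfalso. assert (K := Hub 0 (H _)). simpl in K. auto.
Qed.

Lemma bc_abs k : Rabs (bc k) <= / INR (fact k).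
Proof.
  unfold bc. assert (H1 := fact_pos k). assert (H2 := pow2_pos k).
  assert (H3 := pos_INR k).
  unfold Rdiv. rewrite Rabs_mult, pow_1_abs, Rmult_1_l.
  rewrite Rabs_inv, Rabs_pos_eq.
  2:{ apply Rmult_le_pos; [apply Rmult_le_pos|]; lra. }
  apply Rinv_le_contravar; auto.
  assert (1 <= 2 ^ k) by (apply pow_R1_Rle; lra).
  assert (INR (fact k) <= 2 ^ k * INR (fact k)) by nra.
  nra.
Qed.

Lemma bc_radius : CV_radius bc = p_infty.
Proof.
  apply CV_radius_inf. intros x. unfold CV_disk.
  apply (ex_series_le (K := R_AbsRing) (V := R_CompleteNormedModule) _ (fun n => Rabs x ^ n * / INR (fact n))).
  - intros n. unfold norm; simpl. rewrite Rabs_Rabsolu, Rabs_mult.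
    rewrite <- RPow_abs. rewrite Rmult_comm.
    apply Rmult_le_compat_l. apply pow_le, Rabs_pos. apply bc_abs.
  - eexists. apply is_pseries_R, is_exp_Reals.
Qed.

Lemma bc_inside x : Rbar_lt (Rabs x) (CV_radius bc).
Proof. rewrite bc_radius. simpl. auto. Qed.

Lemma bcd_inside x : Rbar_lt (Rabs x) (CV_radius (PS_derive bc)).
Proof. rewrite CV_radius_derive. apply bc_inside. Qed.

Definition QQ (y : R) : R := PSeries bc y.
Definition TT (s : R) : R := s * QQ (s * s).

Lemma coef_id m : bc (S m) + 2 * (INR (S m) * bc (S m)) = ec (S m).
Proof.
  unfold bc, ec.
  assert (H3 := fact_pos (S m)). assert (H4 := pow2_pos (S m)). assert (H5 := pos_INR (S m)).
  set (r := INR (S m)) in *. set (f := INR (fact (S m))) in *. set (p := 2 ^ S m) in *.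
  field. repeat split; lra.
Qed.

Lemma QQ_ode y : QQ y + 2 * (y * PSeries (PS_derive bc) y) = exp (- y / 2).
Proof.
  assert (H1 : is_pseries bc y (QQ y)) by (apply PSeries_correct, CV_radius_inside, bc_inside).
  assert (H2 : is_pseries (PS_derive bc) y (PSeries (PS_derive bc) y))
    by (apply PSeries_correct, CV_radius_inside, bcd_inside).
  apply is_pseries_incr_1 in H2.
  apply (is_pseries_scal (V := R_NormedModule) 2) in H2.
  2:{ unfold mult; simpl; ring. }
  assert (H := is_pseries_plus _ _ _ _ _ H1 H2).
  apply is_pseries_unique in H.
  assert (E := exp_series y). apply (proj2 (is_pseries_R _ _ _)) in E. apply is_pseries_unique in E.
  rewrite <- E. etransitivity; [symmetry; exact H|]. apply PSeries_ext. intros [|m].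
  - unfold PS_plus, PS_scal, PS_incr_1, bc, ec; simpl. unfold plus, scal, zero; simpl; unfold mult; simpl. field.
  - apply coef_id.
Qed.

Lemma TT_deriv (s : R) : is_derive TT s (exp (- (s * s) / 2)).
Proof.
  unfold TT.
  assert (HQ : is_derive (fun s => QQ (s * s)) s (scal (2 * s) (PSeries (PS_derive bc) (s * s)))).
  { apply (is_derive_comp QQ (fun s => s * s)).
    apply is_derive_PSeries, bc_inside.
    auto_derive; auto; ring. }
  assert (H := is_derive_mult (fun s => s) (fun s => QQ (s * s)) s _ _ (is_derive_id s) HQ
    (fun n m => Rmult_comm n m)).
  rewrite <- QQ_ode.
  replace (QQ (s * s) + 2 * (s * s * PSeries (PS_derive bc) (s * s))) with
    (plus (mult one (QQ (s * s))) (mult s (scal (2 * s) (PSeries (PS_derive bc) (s * s))))).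
  - eapply is_derive_ext; [|exact H]. intros; reflexivity.
  - unfold plus, mult, one, scal; simpl; unfold mult; simpl. req; ring.
Qed.

Lemma is_derive_minus_R (f g : R -> R) (x df dg : R) :
  is_derive f x df -> is_derive g x dg -> is_derive (fun x => f x - g x) x (df - dg).
Proof. intros Hf Hg. exact (is_derive_minus f g x df dg Hf Hg). Qed.

Lemma is_derive_div_R (f : R -> R) (x df c : R) :
  is_derive f x df -> is_derive (fun x => f x / c) x (df / c).
Proof. intros Hf. exact (is_derive_scal_l f x df (/ c) Hf). Qed.

Lemma sqrt2PI_pos : 0 < sqrt (2 * PI).
Proof. apply sqrt_lt_R0. generalize PI_RGT_0; lra. Qed.

Lemma FF_TT s : FF s = TT s / sqrt (2 * PI).
Proof.
  assert (HD : forall x : R, is_derive (fun x => FF x - TT x / sqrt (2 * PI)) x 0).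
  { intros x. replace 0 with (std_normal_pdf x - exp (- (x * x) / 2) / sqrt (2 * PI)).
    apply is_derive_minus_R. apply FF_deriv. apply is_derive_div_R, TT_deriv.
    unfold std_normal_pdf. replace (x ^ 2) with (x * x) by ring. ring. }
  assert (H0 : FF 0 - TT 0 / sqrt (2 * PI) = 0).
  { unfold FF, TT, GG. replace (0 / sqrt 2) with 0 by (unfold Rdiv; ring).
    rewrite RInt_point. unfold zero; simpl. unfold Rdiv; ring. }
  enough (FF s - TT s / sqrt (2 * PI) = 0) by lra.
  rewrite <- H0.
  destruct (Rtotal_order 0 s) as [H|[H|H]].
  - symmetry. apply (eq_is_derive (fun x => FF x - TT x / sqrt (2 * PI))); auto.
  - subst; auto.
  - apply (eq_is_derive (fun x => FF x - TT x / sqrt (2 * PI))); auto.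
Qed.

Lemma p1_closed c : 0 < c ->
  p1 c = sqrt (2 / PI) * (TT (/ c) + c * (exp (- (/ c * / c) / 2) - 1)).
Proof.
  intros Hc. unfold p1. rewrite Phi_eq, FF_TT.
  assert (A : sqrt (2 / PI) * sqrt (2 * PI) = 2).
  { assert (IP : 0 < / PI) by (apply Rinv_0_lt_compat, PI_RGT_0).
    rewrite <- sqrt_mult_alt by (unfold Rdiv; lra). unfold Rdiv.
    replace (2 * / PI * (2 * PI)) with (2 * 2) by (field; apply Rgt_not_eq, PI_RGT_0).
    apply sqrt_square; lra. }
  assert (B := sqrt2PI_pos).
  replace (/ c ^ 2) with (/ c * / c) by (field; lra).
  replace (TT (/ c) / sqrt (2 * PI)) with (sqrt (2 / PI) * TT (/ c) / 2).
  2:{ set (q := sqrt (2 * PI)) in *. set (a := sqrt (2 / PI)) in *.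
        assert (E : a = 2 / q) by (rewrite <- A; field; lra).
        rewrite E; field; lra. }
  field.
Qed.

Lemma coef_sum k : bc k + ec (S k) =
  (-1) ^ k / (2 ^ k * INR (fact k) * (2 * INR k + 2) * (2 * INR k + 1)).
Proof.
  unfold bc, ec.
  assert (H3 := fact_pos k). assert (H4 := pow2_pos k). assert (H5 := pos_INR k).
  replace (INR (fact (S k))) with ((INR k + 1) * INR (fact k)).
  2:{ rewrite fact_simpl, mult_INR, S_INR. reflexivity. }
  simpl pow. field. repeat split; lra.
Qed.

Lemma pow_term c k : c <> 0 ->
  / c * (/ c * / c) ^ k = / c ^ (2 * k + 1) /\
  c * (/ c * / c) ^ S k = / c ^ (2 * k + 1).
Proof.
  intros Hc.
  assert (E : / c ^ (2 * k + 1) = / c * (/ c * / c) ^ k).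
  { rewrite <- pow_inv, pow_add, pow_mult. replace ((/ c) ^ 2) with (/ c * / c) by ring. ring. }
  rewrite E. split; [reflexivity|]. simpl. field. auto.
Qed.

Lemma is_series_incr_1_R (a : nat -> R) (l : R) : is_series a l -> is_series (fun k => a (S k)) (l - a 0%nat).
Proof.
  intros H. apply is_series_incr_1.
  unfold plus; simpl. replace (l - a 0%nat + a 0%nat) with l by (req; ring). exact H.
Qed.

Lemma series_part c : 0 < c -> is_series (p1_term c) (p1 c).
Proof.
  intros Hc. rewrite p1_closed by auto.
  set (s := / c). set (y := s * s).
  assert (H1 : is_series (fun k => y ^ k * bc k) (QQ y)).
  { apply (proj1 (is_pseries_R _ _ _)). apply PSeries_correct, CV_radius_inside, bc_inside. }
  apply (is_series_scal_R _ s) in H1.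
  assert (H2 : is_series (fun k => y ^ (S k) * ec (S k)) (exp (- y / 2) - 1)).
  { replace (exp (- y / 2) - 1) with (exp (- y / 2) - y ^ 0 * ec 0).
    apply (is_series_incr_1_R (fun n => y ^ n * ec n)). apply exp_series.
    unfold ec; simpl. field. }
  apply (is_series_scal_R _ c) in H2.
  assert (H := is_series_plus_R _ _ _ _ H1 H2).
  apply (is_series_scal_R _ (sqrt (2 / PI))) in H.
  eapply is_series_ext; [|exact H].
  intros k. unfold p1_term.
  destruct (pow_term c k) as [P1 P2]; [lra|].
  fold s in P1, P2. fold y in P1, P2.
  rewrite <- coef_sum.
  replace (s * (y ^ k * bc k)) with ((s * y ^ k) * bc k) by ring.
  replace (c * (y ^ S k * ec (S k))) with ((c * y ^ S k) * ec (S k)) by ring.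
  rewrite P1, P2. req; ring.
Qed.

Lemma pdf_pos x : 0 < std_normal_pdf x.
Proof. unfold std_normal_pdf. apply Rdiv_lt_0_compat. apply exp_pos. apply sqrt2PI_pos. Qed.

Lemma pdf_le1 x : std_normal_pdf x <= 1.
Proof.
  unfold std_normal_pdf.
  assert (E : exp (- x ^ 2 / 2) <= 1).
  { rewrite <- exp_0. apply exp_mono_le. assert (0 <= x ^ 2) by (apply pow2_ge_0). lra. }
  assert (S : 1 <= sqrt (2 * PI)).
  { rewrite <- sqrt_1. apply sqrt_le_1_alt. generalize PI_RGT_0; generalize PI2_3_2; lra. }
  assert (P := exp_pos (- x ^ 2 / 2)).
  apply Rmult_le_reg_r with (sqrt (2 * PI)); [lra|].
  unfold Rdiv. rewrite Rmult_assoc, Rinv_l by lra. lra.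
Qed.

Lemma pdf_deriv (x : R) : is_derive std_normal_pdf x (- x * std_normal_pdf x).
Proof.
  unfold std_normal_pdf. auto_derive; auto.
  assert (H := sqrt2PI_pos). req.
  replace (- (x * (x * 1)) * / 2) with (- x ^ 2 / 2) by field. field. lra.
Qed.

Lemma is_derive_const_R (a x : R) : is_derive (fun _ => a) x 0.
Proof. apply (@is_derive_const R_AbsRing R_NormedModule). Qed.

Lemma mono_deriv (f df : R -> R) a b : a <= b ->
  (forall x, a <= x <= b -> is_derive f x (df x)) ->
  (forall x, a <= x <= b -> df x <= 0) -> f b <= f a.
Proof.
  intros Hab Hd Hs.
  destruct (Req_dec a b) as [->|Hn]; [lra|].
  destruct (MVT_gen f a b df) as [c [Hc Hm]].
  - rewrite Rmin_left, Rmax_right by lra. intros x Hx. apply Hd; lra.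
  - rewrite Rmin_left, Rmax_right by lra. intros x Hx.
    apply continuity_pt_filterlim. apply cont_ex. eexists; apply Hd; lra.
  - rewrite Rmin_left, Rmax_right in Hc by lra.
    assert (df c <= 0) by (apply Hs; lra).
    assert (df c * (b - a) <= 0) by nra. lra.
Qed.

Lemma FFs_lim s : is_lim (fun b => FF b - FF s) p_infty (1 / 2 - FF s).
Proof.
  eapply is_lim_minus. apply FF_lim. apply is_lim_const.
  unfold is_Rbar_minus, is_Rbar_plus; simpl. reflexivity.
Qed.

Lemma Phi_upper s : 0 < s -> Phi s <= std_normal_pdf s / s.
Proof.
  intros Hs. rewrite Phi_eq.
  assert (Hb : forall b, s <= b -> FF b - FF s <= std_normal_pdf s / s).
  { intros b Hsb.
    set (K := fun b => FF b - FF s - (std_normal_pdf s - std_normal_pdf b) / s).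
    assert (K s = 0) by (unfold K; unfold Rdiv; ring).
    assert (HK : K b <= K s).
    { apply (mono_deriv K (fun x => std_normal_pdf x - (0 - (- x * std_normal_pdf x)) / s)); auto.
      - intros x _. unfold K. apply is_derive_minus_R.
        replace (std_normal_pdf x) with (std_normal_pdf x - 0) by ring.
        apply is_derive_minus_R. apply FF_deriv. apply is_derive_const_R.
        apply is_derive_div_R. apply is_derive_minus_R. apply is_derive_const_R.
        apply pdf_deriv.
      - intros x Hx. assert (P := pdf_pos x).
        replace (std_normal_pdf x - (0 - - x * std_normal_pdf x) / s)
          with (std_normal_pdf x * (s - x) * / s) by (field; lra).
        assert (0 < / s) by (apply Rinv_0_lt_compat; lra).
        assert (0 <= std_normal_pdf x * (x - s)) by nra. nra. }
    unfold K in HK. assert (P := pdf_pos b).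
    assert (std_normal_pdf b / s > 0) by (apply Rdiv_lt_0_compat; lra).
    unfold Rdiv in *. lra. }
  assert (H := is_lim_le_loc (fun b => FF b - FF s) (fun _ => std_normal_pdf s / s) p_infty
                 (1 / 2 - FF s) (std_normal_pdf s / s)).
  simpl in H. apply H.
  - exists s. intros b Hb2. apply Hb; lra.
  - apply FFs_lim.
  - apply is_lim_const.
Qed.

Definition LL (b : R) : R := std_normal_pdf b * (/ b - / b ^ 3).

Lemma LL_deriv (x : R) : x <> 0 ->
  is_derive LL x (std_normal_pdf x * (3 / x ^ 4 - 1)).
Proof.
  intros Hx. unfold LL, std_normal_pdf. auto_derive.
  - repeat split; auto. intros Z. apply (pow_nonzero x 3 Hx). simpl. exact Z.
  - assert (H := sqrt2PI_pos). req.
    replace (- (x * (x * 1)) * / 2) with (- x ^ 2 / 2) by field. field.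
    repeat split; auto; try lra. 
Qed.

Lemma Phi_lower s : 0 < s -> std_normal_pdf s * (/ s - / s ^ 3) <= Phi s.
Proof.
  intros Hs. rewrite Phi_eq. fold (LL s).
  assert (Hb : forall b, s <= b -> 1 <= b -> LL s <= FF b - FF s + / b).
  { intros b Hsb H1b.
    set (K := fun b => LL s - LL b - (FF b - FF s)).
    assert (K s = 0) by (unfold K; ring).
    assert (HK : K b <= K s).
    { apply (mono_deriv K (fun x => 0 - std_normal_pdf x * (3 / x ^ 4 - 1) - (std_normal_pdf x - 0))); auto.
      - intros x Hx. unfold K. apply is_derive_minus_R. apply is_derive_minus_R.
        apply is_derive_const_R. apply LL_deriv; lra.
        apply is_derive_minus_R. apply FF_deriv. apply is_derive_const_R.
      - intros x Hx. assert (P := pdf_pos x).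
        assert (0 < x ^ 4) by (apply pow_lt; lra).
        assert (0 < / x ^ 4) by (apply Rinv_0_lt_compat; lra).
        replace (0 - std_normal_pdf x * (3 / x ^ 4 - 1) - (std_normal_pdf x - 0))
          with (- 3 * (std_normal_pdf x * / x ^ 4)) by (field; lra).
        nra. }
    unfold K in HK.
    assert (LL b <= / b).
    { unfold LL. assert (P := pdf_pos b). assert (P1 := pdf_le1 b).
      assert (0 < / b) by (apply Rinv_0_lt_compat; lra).
      assert (0 < / b ^ 3) by (apply Rinv_0_lt_compat, pow_lt; lra).
      assert (/ b ^ 3 <= / b).
      { apply Rinv_le_contravar; [lra|]. simpl.
        assert (1 <= b * b) by nra. nra. }
      nra. }
    lra. }
  assert (H := is_lim_le_loc (fun _ => LL s) (fun b => FF b - FF s + / b) p_infty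
                 (LL s) (1 / 2 - FF s)).
  simpl in H. apply H.
  - exists (Rmax s 1). intros b Hb2. apply Hb.
    generalize (Rmax_l s 1); lra. generalize (Rmax_r s 1); lra.
  - apply is_lim_const.
  - eapply is_lim_plus. apply FFs_lim. apply (is_lim_inv (fun y => y) p_infty p_infty).
    apply is_lim_id. discriminate.
    simpl. unfold is_Rbar_plus; simpl. f_equal; f_equal; ring.
Qed.

Lemma poly_lower y d : 0 < d -> d <= 1 / 2 -> 0 < y -> y <= 41 / 50 * d ->
  1 <= (1 - y) * (1 + (1 + d) * y + ((1 + d) * y) ^ 2 / 2 + ((1 + d) * y) ^ 3 / 6).
Proof.
  intros Hd1 Hd2 Hy1 Hy2.
  set (k := 1 + d).
  assert (Hk1 : 1 <= k) by (unfold k; lra). assert (Hk2 : k <= 3 / 2) by (unfold k; lra).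
  assert (Hy3 : y <= 41 / 100) by lra.
  assert (E : (1 - y) * (1 + k * y + (k * y) ^ 2 / 2 + (k * y) ^ 3 / 6) - 1 =
     y * (d + y * (k * k / 2 - k) + y * y * (k * k * (k - 3) / 6) - k * k * k * y * y * y / 6)).
  { unfold k. field. }
  assert (G1 : k * k / 2 - k >= - 1 / 2) by nra.
  assert (G2 : k * k * (k - 3) / 6 >= - 9 / 16).
  { assert (k * k <= 9 / 4) by nra. assert (k * k * (3 - k) <= 9 / 4 * 2) by nra. nra. }
  assert (G3 : k * k * k <= 27 / 8) by (assert (k * k <= 9 / 4) by nra; nra).
  assert (y * y <= 41 / 100 * y) by nra.
  assert (y * y * y <= 41 / 100 * y * y) by nra.
  assert (d + y * (k * k / 2 - k) + y * y * (k * k * (k - 3) / 6) - k * k * k * y * y * y / 6 >= 0).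
  { assert (y * (k * k / 2 - k) >= - 1 / 2 * y) by nra.
    assert (y * y * (k * k * (k - 3) / 6) >= - 9 / 16 * (y * y)) by nra.
    assert (k * k * k * y * y * y / 6 <= 27 / 48 * (y * y * y)).
    { assert (0 <= y * y * y) by (apply Rmult_le_pos; nra). nra. }
    nra. }
  assert (0 <= y * (d + y * (k * k / 2 - k) + y * y * (k * k * (k - 3) / 6) - k * k * k * y * y * y / 6)) by nra.
  lra.
Qed.

Lemma key_lower a c d : 0 < a -> a <= 41 / 50 -> 0 < d -> d <= 1 / 2 -> 0 < c -> c <= d ->
  exp (- a * (1 + d) * c) <= 1 - a * c.
Proof.
  intros Ha1 Ha2 Hd1 Hd2 Hc1 Hc2.
  set (x := a * (1 + d) * c).
  assert (Hx : 0 <= x) by (unfold x; apply Rmult_le_pos; [apply Rmult_le_pos|]; lra).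
  assert (T := exp_ge_taylor x 3 Hx). simpl in T.
  assert (P := poly_lower (a * c) d Hd1 Hd2 ltac:(nra) ltac:(nra)).
  replace ((1 + d) * (a * c)) with x in P by (unfold x; ring).
  replace (- a * (1 + d) * c) with (- x) by (unfold x; ring).
  rewrite exp_Ropp.
  assert (Ex := exp_pos x).
  assert (Hy : 0 < 1 - a * c) by nra.
  assert (1 <= (1 - a * c) * exp x).
  { eapply Rle_trans; [exact P|]. apply Rmult_le_compat_l; [lra|].
    replace (1 + x + x ^ 2 / 2 + x ^ 3 / 6) with
      (1 / 1 + x / 1 + x * x / (1 + 1) + x * (x * x) / (1 + 1 + 1 + 1 + 1 + 1)) by (simpl; field).
    lra. }
  apply Rmult_le_reg_r with (exp x); auto.
  rewrite Rinv_l by lra. lra.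
Qed.

Lemma a_facts : 0 < sqrt (2 / PI) /\ sqrt (2 / PI) <= 41 / 50 /\
  sqrt (2 / PI) * sqrt (2 * PI) = 2.
Proof.
  assert (HP := PI_RGT_0). assert (HP3 := PI2_3_2).
  assert (IP : 0 < / PI) by (apply Rinv_0_lt_compat; lra).
  assert (Hpos : 0 < 2 / PI) by (unfold Rdiv; lra).
  assert (A1 : 0 < sqrt (2 / PI)) by (apply sqrt_lt_R0; auto).
  assert (A2 : sqrt (2 / PI) * sqrt (2 / PI) = 2 / PI) by (apply sqrt_sqrt; lra).
  repeat split; auto.
  - assert (2 / PI < 2 / 3).
    { unfold Rdiv. apply Rmult_lt_compat_l; [lra|]. apply Rinv_lt_contravar; nra. }
    nra.
  - rewrite <- sqrt_mult_alt by lra. unfold Rdiv.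
    replace (2 * / PI * (2 * PI)) with (2 * 2) by (field; lra).
    apply sqrt_square; lra.
Qed.

Lemma bounds_part delta c : 0 < delta -> delta <= 1 / 2 -> 0 < c ->
  c <= Rmin delta (1 / sqrt (2 * ln (1 / delta))) ->
  exp (- sqrt (2 / PI) * (1 + delta) * c) <= p1 c /\
  p1 c <= exp (- sqrt (2 / PI) * (1 - delta ^ 3) * c).
Proof.
  intros Hd1 Hd2 Hc Hmin.
  destruct a_facts as [Ha1 [Ha2 Aq]].
  set (a := sqrt (2 / PI)) in *. set (q := sqrt (2 * PI)) in *.
  assert (Hq : 0 < q) by apply sqrt2PI_pos.
  assert (Hcd : c <= delta) by (eapply Rle_trans; [exact Hmin | apply Rmin_l]).
  assert (Hcl : c <= 1 / sqrt (2 * ln (1 / delta))) by (eapply Rle_trans; [exact Hmin | apply Rmin_r]).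
  set (E := exp (- (/ c ^ 2) / 2)).
  assert (HE0 : 0 < E) by apply exp_pos.
  assert (HL : 0 < ln (1 / delta)).
  { rewrite <- ln_1. apply ln_increasing; [lra|].
    apply (Rmult_lt_reg_r delta); [lra|]. unfold Rdiv. rewrite Rmult_assoc, Rinv_l by lra. lra. }
  assert (HEd : E <= delta).
  { set (L := ln (1 / delta)) in *.
    assert (S2 : 0 < sqrt (2 * L)) by (apply sqrt_lt_R0; lra).
    assert (SS : sqrt (2 * L) * sqrt (2 * L) = 2 * L) by (apply sqrt_sqrt; lra).
    assert (C1 : c * sqrt (2 * L) <= 1).
    { apply (Rmult_le_compat_r (sqrt (2 * L))) in Hcl; [|lra].
      unfold Rdiv in Hcl. rewrite Rmult_1_l, Rinv_l in Hcl by lra. exact Hcl. }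
    assert (C2 : c * c * (2 * L) <= 1).
    { rewrite <- SS. assert (0 <= c * sqrt (2 * L)) by nra. nra. }
    assert (C3 : 2 * L <= / c ^ 2).
    { assert (0 < c ^ 2) by (apply pow_lt; lra).
      apply (Rmult_le_reg_r (c ^ 2)); auto. rewrite Rinv_l by lra. simpl. nra. }
    unfold E. replace delta with (exp (- L)).
    apply exp_mono_le. lra.
    unfold L. rewrite exp_Ropp, exp_ln by (unfold Rdiv; apply Rmult_lt_0_compat; [lra|apply Rinv_0_lt_compat; lra]).
    field. lra. }
  assert (Hpdf : std_normal_pdf (/ c) = E / q).
  { unfold std_normal_pdf, E, q. rewrite pow_inv. reflexivity. }
  assert (Hic : / / c = c) by (apply Rinv_inv).
  assert (Hs : 0 < / c) by (apply Rinv_0_lt_compat; lra).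
  assert (U := Phi_upper (/ c) Hs).
  assert (Lo := Phi_lower (/ c) Hs).
  rewrite Hpdf in U, Lo. unfold Rdiv in U. rewrite Hic in U.
  rewrite pow_inv, !Rinv_inv in Lo.
  assert (Aq' : 2 / q = a) by (rewrite <- Aq; field; lra).
  assert (U2 : 2 * Phi (/ c) <= a * E * c).
  { rewrite <- Aq'. unfold Rdiv. replace (2 * / q * E * c) with (2 * (E * / q * c)) by ring. lra. }
  assert (L2 : a * E * (c - c ^ 3) <= 2 * Phi (/ c)).
  { rewrite <- Aq'. replace (2 / q * E * (c - c ^ 3)) with (2 * (E / q * (c - c ^ 3))) by (field; lra). lra. }
  assert (Hp1 : p1 c = 1 - 2 * Phi (/ c) - a * c * (1 - E)) by reflexivity.
  split.
  - eapply Rle_trans. apply key_lower; auto.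
    rewrite Hp1. assert (0 <= a * c * E) by (apply Rmult_le_pos; [apply Rmult_le_pos|]; lra). lra.
  - eapply Rle_trans; [|apply exp_ineq1_le].
    rewrite Hp1.
    assert (a * E * c ^ 3 <= a * c * delta ^ 3).
    { assert (c ^ 3 = c * (c * c)) by ring. assert (delta ^ 3 = delta * (delta * delta)) by ring.
      assert (c * c <= delta * delta) by nra.
      assert (E * (c * c) <= delta * (delta * delta)) by nra.
      assert (0 < a * c) by nra. nra. }
    assert (a * E * (c - c ^ 3) = a * E * c - a * E * c ^ 3) by ring.
    nra.
Qed.

Theorem lemma6 :
  (forall c : R, 0 < c -> is_series (p1_term c) (p1 c)) /\
  (forall delta c : R, 0 < delta -> delta <= 1 / 2 -> 0 < c ->
     c <= Rmin delta (1 / sqrt (2 * ln (1 / delta))) ->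
     exp (- sqrt (2 / PI) * (1 + delta) * c) <= p1 c /\
     p1 c <= exp (- sqrt (2 / PI) * (1 - delta ^ 3) * c)).
Proof.
  split.
  - apply series_part.
  - apply bounds_part.
Qed.
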